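(* Let $k\ge2$ and $n\ge 2k$ be integers, and set $\alpha=\frac{2k}{k+1}$, $\beta=\frac nk-2$, $a=\frac{n+\alpha}{2}$, $b=\frac{\alpha+\beta}{2}$, $c=\frac n2$, $d_1=2a+b-2c$, $d_2=c-a+1$, $d_3=4ab(k-1)$. Then the function $$g(t)=\frac{d_1t-d_2(1-t)+\sqrt{(d_1t-d_2(1-t))^2+d_3t}}{2c}$$ is concave on $[0,+\infty)$. *)

(* Defs.v *)
From Stdlib Require Import Reals.
Open Scope R_scope.

Definition concave_on (S : R -> Prop) (f : R -> R) : Prop :=
  forall x y l, S x -> S y -> 0 <= l <= 1 ->
    l * f x + (1 - l) * f y <= f (l * x + (1 - l) * y).

Definition g6 (k n : nat) (t : R) : R :=
  let kr := INR k in
  let nr := INR n in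
  let alpha := 2 * kr / (kr + 1) in
  let beta := nr / kr - 2 in
  let a := (nr + alpha) / 2 in
  let b := (alpha + beta) / 2 in
  let c := nr / 2 in
  let d1 := 2 * a + b - 2 * c in
  let d2 := c - a + 1 in
  let d3 := 4 * a * b * (kr - 1) in
  (d1 * t - d2 * (1 - t) + sqrt ((d1 * t - d2 * (1 - t)) ^ 2 + d3 * t)) / (2 * c).

(* Main.v *)
Require Import Defs.
From Stdlib Require Import Reals Lra Psatz.
Open Scope R_scope.

Lemma sqrt_conc (p q D x y l : R) (hp : 0 < p) (hq : 0 < q) (hD : 4*p*q <= D)
  (hx : 0 <= x) (hy : 0 <= y) (hl : 0 <= l <= 1) :
  l * sqrt ((p*x-q)^2 + D*x) + (1-l) * sqrt ((p*y-q)^2 + D*y)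
  <= sqrt ((p*(l*x+(1-l)*y)-q)^2 + D*(l*x+(1-l)*y)).
Proof.
  assert (hD0 : 0 <= D) by nra.
  set (Qx := (p*x-q)^2 + D*x). set (Qy := (p*y-q)^2 + D*y).
  assert (hQx : 0 <= Qx) by (unfold Qx; nra).
  assert (hQy : 0 <= Qy) by (unfold Qy; nra).
  set (sx := sqrt Qx). set (sy := sqrt Qy).
  assert (ex : sx * sx = Qx) by (apply sqrt_sqrt; auto).
  assert (ey : sy * sy = Qy) by (apply sqrt_sqrt; auto).
  assert (sx0 : 0 <= sx) by apply sqrt_pos.
  assert (sy0 : 0 <= sy) by apply sqrt_pos.
  set (M := 2*(p*x-q)*(p*y-q) + D*(x+y)).
  assert (hM : 0 <= M).
  { unfold M. assert (D*(x+y) >= 4*p*q*(x+y)) by nra.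
    assert (0 <= p*p*(x*y)) by (apply Rmult_le_pos; nra).
    assert (0 <= p*q*(x+y)) by (apply Rmult_le_pos; nra).
    assert (0 <= q*q) by nra.
    assert (2*(p*x-q)*(p*y-q) + 4*p*q*(x+y) = 2*(p*p*(x*y)) + 2*(p*q*(x+y)) + 2*(q*q)) by ring.
    lra. }
  assert (iden : M*M - 4*Qx*Qy = (x-y)^2 * D * (D - 4*p*q)) by (unfold M, Qx, Qy; ring).
  assert (hM2 : 4*Qx*Qy <= M*M).
  { assert (0 <= (x-y)^2 * D * (D - 4*p*q)).
    { apply Rmult_le_pos; [apply Rmult_le_pos|]; [apply pow2_ge_0|lra|lra]. } lra. }
  assert (hs : 2*sx*sy <= M).
  { destruct (Rle_lt_dec (2*sx*sy) M) as [h|h]; auto.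
    assert (M*M < (2*sx*sy)*(2*sx*sy)) by nra. nra. }
  set (z := l*x+(1-l)*y).
  set (lhs := l*sx + (1-l)*sy).
  assert (hl0 : 0 <= lhs) by (unfold lhs; nra).
  assert (hz : lhs*lhs <= (p*z-q)^2 + D*z).
  { assert (idz : (p*z-q)^2 + D*z - lhs*lhs = l*(1-l)*(M - 2*sx*sy)).
    { replace (lhs*lhs) with (l*l*(sx*sx) + (1-l)*(1-l)*(sy*sy) + 2*l*(1-l)*sx*sy)
        by (unfold lhs; ring).
      rewrite ex, ey. unfold z, M, Qx, Qy. ring. }
    assert (0 <= l*(1-l)*(M - 2*sx*sy)).
    { apply Rmult_le_pos; nra. } lra. }
  rewrite <- (sqrt_square lhs) by auto.
  apply sqrt_le_1_alt. exact hz.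
Qed.

Lemma gen (p q D c d1 d2 x y l : R) (hp : 0 < p) (hq : 0 < q) (hD : 4*p*q <= D)
  (hc : 0 < c) (e1 : p = d1 + d2) (e2 : q = d2)
  (hx : 0 <= x) (hy : 0 <= y) (hl : 0 <= l <= 1) :
  l * ((d1*x - d2*(1-x) + sqrt ((d1*x - d2*(1-x))^2 + D*x)) / (2*c)) +
  (1-l) * ((d1*y - d2*(1-y) + sqrt ((d1*y - d2*(1-y))^2 + D*y)) / (2*c)) <=
  (d1*(l*x+(1-l)*y) - d2*(1-(l*x+(1-l)*y)) +
    sqrt ((d1*(l*x+(1-l)*y) - d2*(1-(l*x+(1-l)*y)))^2 + D*(l*x+(1-l)*y))) / (2*c).
Proof.
  assert (ht : forall t, d1*t - d2*(1-t) = p*t - q) by (intro; subst; ring).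
  rewrite !ht.
  pose proof (sqrt_conc p q D x y l hp hq hD hx hy hl) as K.
  assert (hc2 : 0 < / (2*c)) by (apply Rinv_0_lt_compat; lra).
  unfold Rdiv.
  set (s := / (2*c)) in *.
  set (Sx := sqrt ((p*x-q)^2 + D*x)) in *.
  set (Sy := sqrt ((p*y-q)^2 + D*y)) in *.
  set (Sz := sqrt ((p*(l*x+(1-l)*y)-q)^2 + D*(l*x+(1-l)*y))) in *.
  assert (0 <= (Sz - (l*Sx + (1-l)*Sy)) * s) by (apply Rmult_le_pos; lra).
  nra.
Qed.

Theorem lemma6p1 (k n : nat) (hk : (2 <= k)%nat) (hn : (2 * k <= n)%nat) :
  concave_on (fun t => 0 <= t) (g6 k n).
Proof.
  unfold concave_on, g6. cbv zeta. intros x y l hx hy hl.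
  assert (hK : 2 <= INR k) by (change 2 with (INR 2); apply le_INR; lia).
  assert (hN : 2 * INR k <= INR n) by (change 2 with (INR 2); rewrite <- mult_INR; apply le_INR; lia).
  set (K := INR k) in *. set (N := INR n) in *.
  set (al := 2*K/(K+1)).
  assert (hal : al*(K+1) = 2*K) by (unfold al; field; lra).
  assert (hal1 : al < 2) by nra.
  assert (hal0 : 1 <= al) by nra.
  set (be := N/K - 2).
  assert (hNK : N/K*K = N) by (field; lra).
  assert (hbe : 0 <= be) by (unfold be; nra).
  apply gen with (p := (N+al)/2 + (al+be)/2 - N/2 + 1) (q := N/2 - (N+al)/2 + 1); auto; try lra; try ring.
  assert (hq : (N/2 - (N+al)/2 + 1) = 1 - al/2) by field.
  assert (hq2 : (1 - al/2)*(K+1) = 1) by nra.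
  assert (hq3 : 0 <= 1 - al/2 <= 1/3) by nra.
  assert (hp : (N + al) / 2 + (al + be) / 2 - N / 2 + 1 = al + be/2 + 1) by field.
  rewrite hq, hp.
  assert (hl1 : (al + be/2 + 1)*(1 - al/2) <= 1 + be/6) by nra.
  assert (hA : 2 <= (N+al)/2) by lra.
  assert (hB : 1/2 + be/2 <= (al+be)/2) by lra.
  assert (hAB : 2*(1/2+be/2) <= (N+al)/2 * ((al+be)/2)) by nra.
  assert (hABK : (N+al)/2 * ((al+be)/2) <= (N+al)/2 * ((al+be)/2) * (K-1)) by nra.
  lra.
Qed.
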